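(* Let $\mathcal{T}$ be an MPQ-tree of an interval graph $G=(V,E)$, let $(x,y)\in E$ with $x$ over $y$ and $node(x)\neq node(y)$. If $node(y)$ is a P-node that is not a leaf of $\mathcal{T}$, then $(x,y)$ is not an interval edge.
   Context: Graphs are finite and simple; for $G=(V,E)$ and $e\in E$, $G-e=(V,E\setminus\{e\})$. An edge $(x,y)\in E$ of an interval graph $G$ is an interval edge if $G-(x,y)$ is an interval graph. An MPQ-tree of an interval graph $G=(V,E)$, $V=\{1,\dots,n\}$, is a rooted plane tree whose nodes are P-nodes and Q-nodes. Each P-node carries a (possibly empty) set of vertices. A Q-node has $k\ge 3$ ordered positions $1,\dots,k$; position $i$ carries a set $S_i\subseteq V$ (the $i$-th section) and a child subtree $T_i$, which may be empty. Every vertex $v$ is assigned to exactly one node $node(v)$: either $v$ lies in the set of the P-node $node(v)$, or $node(v)$ is a Q-node and $v$ lies exactly in the sections $S_{l(v)},\dots,S_{r(v)}$ of it, with $l(v)<r(v)$. For a node with child subtrees $T_1,\dots,T_k$, $V_i$ denotes the set of vertices assigned to nodes of $T_i$ ($V_i=\emptyset$ if $T_i$ is empty). The maximal cliques of $G$ are in bijection with the descending paths from the root which at a P-node continue into one of its children (stopping if there is none) and at a Q-node choose a position $i$ and continue into $T_i$ (stopping if $T_i$ is empty); the clique is the union of the sets of the visited P-nodes and the chosen sections. Reading these cliques left to right gives a linear order of the maximal cliques, and the orders obtained this way after arbitrarily permuting children of P-nodes and reversing the positions of Q-nodes are exactly the orders of the maximal cliques of $G$ in which the cliques containing any fixed vertex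 are consecutive. Moreover, for every Q-node with sections $S_1,\dots,S_k$: (a) $V_1\neq\emptyset$ and $V_k\ne\emptyset$; (b) $S_1\subseteq S_2$ and $S_k\subseteq S_{k-1}$; (c) $S_{i-1}\cap S_i\neq\emptyset$ for $2\le i\le k$; (d) $S_{i-1}\neq S_i$ for $2\le i\le k$; (e) $(S_i\cap S_{i+1})\setminus S_1\neq\emptyset$ and $(S_{i-1}\cap S_i)\setminus S_k\neq\emptyset$ for $2\le i\le k-1$; (f) $(S_{i-1}\cup V_{i-1})\setminus S_i\neq\emptyset$ and $(S_i\cup V_i)\setminus S_{i-1}\neq\emptyset$ for $2\le i\le k$; and further (g) no empty P-node has an empty P-node as its parent, (h) no P-node has exactly one child whose root is a P-node, (i) every child subtree of a P-node is nonempty. We say $x$ is over $y$ if $node(x)$ is the lowest common ancestor of $node(x)$ and $node(y)$ in $\mathcal{T}$. *)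

(* Defs.v *)
From Stdlib Require Import Permutation.
From mathcomp Require Import all_boot.
Set Implicit Arguments. Unset Strict Implicit. Unset Printing Implicit Defensive.

(** * Graphs: a finite simple graph is a symmetric irreflexive relation e on a finType. *)

Definition remove_edge (T : finType) (e : rel T) (x y : T) : rel T :=
  fun u v => e u v && ~~ (((u == x) && (v == y)) || ((u == y) && (v == x))).

Definition interval_graph (T : finType) (e : rel T) : Prop :=
  exists I : T -> nat * nat,
    (forall v, (I v).1 <= (I v).2) /\
    (forall u v, u != v -> e u v = ((I u).1 <= (I v).2) && ((I v).1 <= (I u).2)).

Definition is_clique (T : finType) (e : rel T) (K : {set T}) : bool :=
  [forall u in K, forall v in K, (u != v) ==> e u v].

Definition maximal_clique (T : finType) (e : rel T) (K : {set T}) : Prop :=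
  is_clique e K /\ (forall K', is_clique e K' -> K \subset K' -> K' = K).

(** PN S ch : a P-node carrying the set S with children ch (each child subtree nonempty).
    QN secs : a Q-node; position i (0-based) carries section (secs_i).1 and an
              optional (possibly empty) child subtree (secs_i).2. *)
Inductive mpq (T : finType) : Type :=
| PN : {set T} -> seq (mpq T) -> mpq T
| QN : seq ({set T} * option (mpq T)) -> mpq T.

Section MPQ.
Variable T : finType.
Implicit Types (t : mpq T) (e : rel T).

Fixpoint verts t : {set T} :=
  match t with
  | PN A ch => A :|: (fix F (l : seq (mpq T)) := match l with
                       | [::] => set0 | c :: l' => verts c :|: F l' end) ch
  | QN secs => (fix F (l : seq ({set T} * option (mpq T))) := match l with
                 | [::] => set0
                 | (A, o) :: l' =>
                     A :|: (match o with None => set0 | Some c => verts c end) :|: F l'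
                 end) secs
  end.

Fixpoint cliques t : seq {set T} :=
  match t with
  | PN A ch =>
      match ch with
      | [::] => [:: A]
      | _ => (fix F (l : seq (mpq T)) := match l with
               | [::] => [::]
               | c :: l' => map (fun K => A :|: K) (cliques c) ++ F l' end) ch
      end
  | QN secs => (fix F (l : seq ({set T} * option (mpq T))) := match l with
                 | [::] => [::]
                 | (A, None) :: l' => A :: F l'
                 | (A, Some c) :: l' => map (fun K => A :|: K) (cliques c) ++ F l'
                 end) secs
  end.

(** Node addresses: sequence of child indices from the root
    (for a Q-node, index = position). *)
Fixpoint subtree t (a : seq nat) {struct a} : option (mpq T) :=
  match a with
  | [::] => Some t
  | i :: a' =>
      match t with
      | PN _ ch => match onth ch i with Some c => subtree c a' | None => None end
      | QN secs => match onth secs i with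
                   | Some (_, Some c) => subtree c a'
                   | _ => None end
      end
  end.

Definition at_node t (a : seq nat) (v : T) : Prop :=
  match subtree t a with
  | Some (PN A _) => v \in A
  | Some (QN secs) => has (fun p : {set T} * option (mpq T) => v \in p.1) secs
  | None => False
  end.

Definition isP t : bool := if t is PN _ _ then true else false.
Definition isEmptyP t : bool := if t is PN A _ then A == set0 else false.

(** Local conditions (g), (h) at a P-node; (i) holds by construction. *)
Definition P_ok (A : {set T}) (ch : seq (mpq T)) : Prop :=
  (A == set0 -> all (fun c => ~~ isEmptyP c) ch) /\
  ~ (size ch = 1 /\ all isP ch).

Definition sec (secs : seq ({set T} * option (mpq T))) (i : nat) : {set T} :=
  nth set0 (map fst secs) i.
Definition subV (secs : seq ({set T} * option (mpq T))) (i : nat) : {set T} :=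
  match nth None (map snd secs) i with Some c => verts c | None => set0 end.

(** Local conditions at a Q-node with positions 0..k-1 (paper: 1..k), (a)-(f). *)
Definition Q_ok (secs : seq ({set T} * option (mpq T))) : Prop :=
  let k := size secs in
  let A := sec secs in let V := subV secs in
  [/\ 3 <= k,
      (V 0 != set0 /\ V k.-1 != set0) /\
      (A 0 \subset A 1 /\ A k.-1 \subset A k.-2),
      (forall i, 1 <= i < k -> A i.-1 :&: A i != set0) /\
      (forall i, 1 <= i < k -> A i.-1 != A i),
      (forall i, 1 <= i < k.-1 ->
                   ((A i :&: A i.+1) :\: A 0 != set0) /\
                   ((A i.-1 :&: A i) :\: A k.-1 != set0)) &
      (forall i, 1 <= i < k ->
                   ((A i.-1 :|: V i.-1) :\: A i != set0) /\
                   ((A i :|: V i) :\: A i.-1 != set0))].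

Fixpoint mpq_wf t : Prop :=
  match t with
  | PN A ch => P_ok A ch /\
      (fix F (l : seq (mpq T)) := match l with
        | [::] => True | c :: l' => mpq_wf c /\ F l' end) ch
  | QN secs => Q_ok secs /\
      (fix F (l : seq ({set T} * option (mpq T))) := match l with
        | [::] => True
        | (_, None) :: l' => F l'
        | (_, Some c) :: l' => mpq_wf c /\ F l' end) secs
  end.

(** teq t t' : t' is obtained from t by permuting children of P-nodes and
    reversing the positions of Q-nodes (arbitrarily, at every node). *)
Fixpoint teq t (t' : mpq T) {struct t} : Prop :=
  match t, t' with
  | PN A ch, PN A' ch' =>
      A = A' /\ exists ch1, Permutation ch1 ch' /\
        (fix F (l l1 : seq (mpq T)) := match l, l1 with
          | [::], [::] => True
          | c :: l', c1 :: l1' => teq c c1 /\ F l' l1'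
          | _, _ => False end) ch ch1
  | QN q, QN q' =>
      exists q1, (q' = q1 \/ q' = rev q1) /\
        (fix F (l l1 : seq ({set T} * option (mpq T))) := match l, l1 with
          | [::], [::] => True
          | (A, o) :: l', (A1, o1) :: l1' =>
              [/\ A = A1,
                  match o, o1 with
                  | None, None => True
                  | Some c, Some c1 => teq c c1
                  | _, _ => False end
                & F l' l1']
          | _, _ => False end) q q1
  | _, _ => False
  end.

Definition consecutive_clique_order e (s : seq {set T}) : Prop :=
  [/\ uniq s, (forall K, K \in s <-> maximal_clique e K) &
      (forall v i j k, i <= j <= k -> k < size s ->
         v \in nth set0 s i -> v \in nth set0 s k -> v \in nth set0 s j)].

Definition mpq_tree_of e t : Prop :=
  [/\ mpq_wf t,
      (forall v, exists! a, at_node t a v),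
      (forall a secs v, subtree t a = Some (QN secs) -> at_node t a v ->
         exists l r, l < r < size secs /\
           (forall i, i < size secs -> (v \in sec secs i) = (l <= i <= r))),
      (* maximal cliques are in bijection with descending paths *)
      uniq (cliques t) /\ (forall K, K \in cliques t <-> maximal_clique e K) &
      (forall s, (exists t', teq t t' /\ s = cliques t') <-> consecutive_clique_order e s)].

End MPQ.

(* Main.v *)
Require Import Defs.
From mathcomp Require Import all_boot zify.
From Stdlib Require List.
Set Implicit Arguments. Unset Strict Implicit. Unset Printing Implicit Defensive.

Section S.
Variable T : finType.
Implicit Types (t : mpq T) (e : rel T).

Definition mpq_ind' (P : mpq T -> Prop)
  (HP : forall A ch, (forall c, List.In c ch -> P c) -> P (PN A ch))
  (HQ : forall secs, (forall S c, List.In (S, Some c) secs -> P c) -> P (QN secs)) :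
  forall t, P t :=
  fix F t := match t with
  | PN A ch => HP A ch ((fix G (l : seq (mpq T)) : forall c, List.In c l -> P c :=
       match l with
       | [::] => fun c (H : List.In c [::]) => match H with end
       | c0 :: l' => fun c H => match H with
                    | or_introl E => eq_ind c0 P (F c0) c E
                    | or_intror H' => G l' c H' end
       end) ch)
  | QN secs => HQ secs ((fix G (l : seq ({set T} * option (mpq T))) :
        forall S c, List.In (S, Some c) l -> P c :=
       match l with
       | [::] => fun S c (H : List.In (S, Some c) [::]) => match H with end
       | p0 :: l' => fun S c H => match H with
                    | or_introl E => match p0 as p return p = (S, Some c) -> P c with
                                     | (_, Some c0) => fun E' => eq_ind c0 P (F c0) c
                                           (f_equal (fun q => match q.2 with Some z => z | None => c0 end) E')
                                     | (_, None) => fun E' => ltac:(discriminate E')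
                                     end E
                    | or_intror H' => G l' S c H' end
       end) secs)
  end.

Fixpoint pclique t (p : seq nat) {struct p} : {set T} :=
  match t, p with
  | PN A _, [::] => A
  | PN A ch, i :: p' => A :|: match onth ch i with Some c => pclique c p' | None => set0 end
  | QN _, [::] => set0
  | QN secs, i :: p' => match onth secs i with
                        | Some (B, Some c) => B :|: pclique c p'
                        | Some (B, None) => B
                        | None => set0 end
  end.

Fixpoint paths t : seq (seq nat) :=
  match t with
  | PN A ch => match ch with [::] => [:: [::]] | _ =>
      (fix F (l : seq (mpq T)) (i : nat) := match l with
        | [::] => [::]
        | c :: l' => map (cons i) (paths c) ++ F l' i.+1 end) ch 0 end
  | QN secs => (fix F (l : seq ({set T} * option (mpq T))) (i : nat) := match l with
        | [::] => [::]
        | (_, None) :: l' => [:: i] :: F l' i.+1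
        | (_, Some c) :: l' => map (cons i) (paths c) ++ F l' i.+1 end) secs 0
  end.

Definition FclP (A : {set T}) := fix F (l : seq (mpq T)) : seq {set T} := match l with
  | [::] => [::] | c :: l' => map (fun K => A :|: K) (cliques c) ++ F l' end.
Definition FclQ := fix F (l : seq ({set T} * option (mpq T))) : seq {set T} := match l with
  | [::] => [::]
  | (B, None) :: l' => B :: F l'
  | (B, Some c) :: l' => map (fun K => B :|: K) (cliques c) ++ F l' end.
Definition FpP := fix F (l : seq (mpq T)) (i : nat) : seq (seq nat) := match l with
  | [::] => [::] | c :: l' => map (cons i) (paths c) ++ F l' i.+1 end.
Definition FpQ := fix F (l : seq ({set T} * option (mpq T))) (i : nat) : seq (seq nat) := match l with
  | [::] => [::]
  | (_, None) :: l' => [:: i] :: F l' i.+1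
  | (_, Some c) :: l' => map (cons i) (paths c) ++ F l' i.+1 end.

Lemma onth_cs (U : Type) (pre l : seq U) x : onth (pre ++ x :: l) (size pre) = Some x.
Proof. by elim: pre. Qed.

Lemma cliquesPE A c l : cliques (PN A (c :: l)) = FclP A (c :: l). Proof. reflexivity. Qed.
Lemma cliquesQE secs : cliques (QN secs) = FclQ secs. Proof. by []. Qed.
Lemma pathsPE A c l : paths (PN A (c :: l)) = FpP (c :: l) 0. Proof. by []. Qed.
Lemma pathsQE secs : paths (QN secs) = FpQ secs 0. Proof. by []. Qed.

Lemma cliques_paths t : cliques t = map (pclique t) (paths t).
Proof.
elim/mpq_ind': t => [A ch IH|secs IH].
  case: ch IH => [|c l] IH //.
  rewrite cliquesPE pathsPE.
  have: forall pre, FclP A (c :: l) = map (pclique (PN A (pre ++ c :: l))) (FpP (c :: l) (size pre)).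
    elim: (c :: l) IH => [|c0 l0 IHl] IH0 pre //=.
    rewrite map_cat -map_comp (IH0 c0 (or_introl erefl)) -map_comp.
    congr (_ ++ _); first by apply: eq_map => q /=; rewrite onth_cs.
    have := IHl (fun c H => IH0 c (or_intror H)) (rcons pre c0).
    by rewrite cat_rcons size_rcons.
  by move=> /(_ [::]).
rewrite cliquesQE pathsQE.
have: forall pre, FclQ secs = map (pclique (QN (pre ++ secs))) (FpQ secs (size pre)).
  elim: secs IH => [|[B [c0|]] l0 IHl] IH0 pre //=.
    rewrite map_cat -map_comp (IH0 B c0 (or_introl erefl)) -map_comp.
    congr (_ ++ _); first by apply: eq_map => q /=; rewrite onth_cs.
    have := IHl (fun S c H => IH0 S c (or_intror H)) (rcons pre (B, Some c0)).
    by rewrite cat_rcons size_rcons.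
  rewrite onth_cs.
  congr (_ :: _).
  have := IHl (fun S c H => IH0 S c (or_intror H)) (rcons pre (B, None)).
  by rewrite cat_rcons size_rcons.
by move=> /(_ [::]).
Qed.

Lemma FpP_head l i p : p \in FpP l i -> exists j q, p = j :: q /\ i <= j.
Proof.
elim: l i => [|c l IH] i //=; rewrite mem_cat => /orP[/mapP[q _ ->]|/IH[j [q [-> h]]]].
  by exists i, q.
by exists j, q; split => //; apply: ltnW.
Qed.

Lemma FpQ_head l i p : p \in FpQ l i -> exists j q, p = j :: q /\ i <= j.
Proof.
elim: l i => [|[B [c|]] l IH] i //=.
  rewrite mem_cat => /orP[/mapP[q _ ->]|/IH[j [q [-> h]]]].
    by exists i, q.
  by exists j, q; split => //; apply: ltnW.
rewrite inE => /orP[/eqP->|/IH[j [q [-> h]]]]; first by exists i, [::].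
by exists j, q; split => //; apply: ltnW.
Qed.

Lemma uniq_cons_part i (P R : seq (seq nat)) :
  uniq P -> uniq R -> (forall p, p \in R -> exists j q, p = j :: q /\ i < j) ->
  uniq (map (cons i) P ++ R).
Proof.
move=> uP uR hR; rewrite cat_uniq uR (map_inj_uniq (fun a b (E : i :: a = i :: b) => esym (f_equal behead (esym E)))) uP /= andbT.
apply/hasPn => p /hR [j [q [-> h]]]; apply/mapP => [[q' _ E]].
by case: E => E _; rewrite E ltnn in h.
Qed.

Lemma paths_uniq t : uniq (paths t).
Proof.
elim/mpq_ind': t => [A ch IH|secs IH].
  case: ch IH => [|c l] IH //; rewrite pathsPE.
  elim: (c :: l) IH (0) => [|c0 l0 IHl] IH0 i //=.
  apply: uniq_cons_part; first exact: (IH0 c0 (or_introl erefl)).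
    exact: IHl (fun c H => IH0 c (or_intror H)) _.
  by move=> p /FpP_head.
rewrite pathsQE.
elim: secs IH (0) => [|[B [c0|]] l0 IHl] IH0 i //=.
  apply: uniq_cons_part; first exact: (IH0 B c0 (or_introl erefl)).
    exact: IHl (fun S c H => IH0 S c (or_intror H)) _.
  by move=> p /FpQ_head.
rewrite IHl; last exact: (fun S c H => IH0 S c (or_intror H)).
rewrite andbT; apply/negP => /FpQ_head [j [q [E h]]].
by case: E => E _; rewrite E ltnn in h.
Qed.

Lemma FpP_mem l i j c q : onth l j = Some c -> q \in paths c -> (i + j) :: q \in FpP l i.
Proof.
elim: l i j => [|c0 l IH] i [|j] //=.
  by case=> ->; rewrite addn0 mem_cat => hq; rewrite map_f.
by move=> /IH h /h; rewrite mem_cat addnS -addSn => ->; rewrite orbT.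
Qed.

Lemma FpQ_mem_some l i j B c q : onth l j = Some (B, Some c) -> q \in paths c -> (i + j) :: q \in FpQ l i.
Proof.
elim: l i j => [|[B0 [c0|]] l IH] i [|j] //=.
- by case=> _ ->; rewrite addn0 mem_cat => hq; rewrite map_f.
- by move=> /IH h /h; rewrite mem_cat addnS -addSn => ->; rewrite orbT.
- by move=> /IH h /h; rewrite inE addnS -addSn => ->; rewrite orbT.
Qed.

Lemma FpQ_mem_none l i j B : onth l j = Some (B, None) -> [:: i + j] \in FpQ l i.
Proof.
elim: l i j => [|[B0 [c0|]] l IH] i [|j] //=.
- by move=> /IH h; rewrite mem_cat addnS -addSn h orbT.
- by rewrite addn0 inE eqxx.
- by move=> /IH h; rewrite inE addnS -addSn h orbT.
Qed.

Lemma paths_sub t a s q : subtree t a = Some s -> q \in paths s -> a ++ q \in paths t.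
Proof.
elim: a t => [|i a IH] t; first by case=> ->.
case: t => [A ch|secs]; rewrite [subtree _ _]/=.
  case E: (onth ch i) => [c|] // /IH h /h hq.
  case: ch E => [|c0 l] E; first by case: i E.
  by rewrite [_ ++ _]/= pathsPE; have := FpP_mem 0 E hq.
case E: (onth secs i) => [[B [c|]]|] // /IH h /h hq.
by have := FpQ_mem_some 0 E hq; rewrite pathsQE.
Qed.

Definition WFP := fix F (l : seq (mpq T)) : Prop := match l with
        | [::] => True | c :: l' => mpq_wf c /\ F l' end.
Definition WFQ := fix F (l : seq ({set T} * option (mpq T))) : Prop := match l with
        | [::] => True
        | (_, None) :: l' => F l'
        | (_, Some c) :: l' => mpq_wf c /\ F l' end.
Lemma wfPE A ch : mpq_wf (PN A ch) = (P_ok A ch /\ WFP ch). Proof. reflexivity. Qed.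
Lemma wfQE secs : mpq_wf (QN secs) = (Q_ok secs /\ WFQ secs). Proof. reflexivity. Qed.

Lemma WFP_onth l i c : WFP l -> onth l i = Some c -> mpq_wf c.
Proof. by elim: l i => [|c0 l IH] [|i] //= [h1 h2]; [case=> <- | apply: IH]. Qed.

Lemma WFQ_onth l i B c : WFQ l -> onth l i = Some (B, Some c) -> mpq_wf c.
Proof.
elim: l i => [|[B0 [c0|]] l IH] [|i] //=; first by case=> h1 _ [_ <-].
  by case=> _ h; apply: IH.
by move=> h; apply: IH.
Qed.

Lemma wf_subtree t a s : mpq_wf t -> subtree t a = Some s -> mpq_wf s.
Proof.
elim: a t => [|i a IH] t /=; first by move=> h [<-].
case: t => [A ch|secs].
  rewrite wfPE => -[_ hw]; case E: (onth ch i) => [c|] //; apply: IH.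
  exact: WFP_onth E.
rewrite wfQE => -[_ hw]; case E: (onth secs i) => [[B [c|]]|] //; apply: IH.
exact: WFQ_onth E.
Qed.

Lemma paths_nonempty t : mpq_wf t -> exists q, q \in paths t.
Proof.
elim/mpq_ind': t => [A ch IH|secs IH].
  case: ch IH => [|c l] IH; first by exists [::]; rewrite inE.
  rewrite wfPE => -[_ hw]; have wc : mpq_wf c by case: hw.
  have [q hq] := IH c (or_introl erefl) wc.
  by exists (0 :: q); rewrite pathsPE /= mem_cat map_f.
rewrite wfQE => -[[hk _ _ _ _] hw].
rewrite pathsQE.
case: secs hk hw IH => [|[B [c|]] l] // _.
  move=> [wc _] IH; have [q hq] := IH B c (or_introl erefl) wc.
  by exists (0 :: q); rewrite /= mem_cat map_f.
by move=> _ _; exists [:: 0]; rewrite /= inE eqxx.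
Qed.

Definition nodecond t (a p : seq nat) (v : T) : bool :=
  match subtree t a with
  | Some (PN A _) => v \in A
  | Some (QN secs) => (size a < size p) && (v \in sec secs (nth 0 p (size a)))
  | None => false
  end.

Lemma nodecondPE A ch i a i' p v : nodecond (PN A ch) (i :: a) (i' :: p) v =
  if onth ch i is Some c then nodecond c a p v else false.
Proof. by rewrite /nodecond /=; case: (onth ch i). Qed.

Lemma nodecondQE secs i a i' p v : nodecond (QN secs) (i :: a) (i' :: p) v =
  if onth secs i is Some (_, Some c) then nodecond c a p v else false.
Proof. by rewrite /nodecond /=; case: (onth secs i) => [[B [c|]]|]. Qed.

Lemma sec_onth (secs : seq ({set T} * option (mpq T))) i B o : onth secs i = Some (B, o) -> sec secs i = B.
Proof. rewrite /sec; elim: secs i => [|s l IH] [|i] //=; first by move=> [->]. exact: IH. Qed.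

Lemma sec_onth_none (secs : seq ({set T} * option (mpq T))) i : onth secs i = None -> sec secs i = set0.
Proof. by rewrite /sec; elim: secs i => [|s l IH] [|i] //= /IH. Qed.

Lemma sec_has (secs : seq ({set T} * option (mpq T))) i v : v \in sec secs i -> has (fun p : {set T} * option (mpq T) => v \in p.1) secs.
Proof.
rewrite /sec; elim: secs i => [|s l IH] [|i] /=; rewrite ?nth_nil ?inE //.
  by move=> ->.
by move/IH => ->; rewrite orbT.
Qed.

Lemma nodecond_at t a p v : nodecond t a p v -> at_node t a v.
Proof.
rewrite /nodecond /at_node; case: (subtree t a) => [[A ch|secs]|] //.
by case/andP=> _ /sec_has.
Qed.

Lemma C2 t a p v : prefix a p -> nodecond t a p v -> v \in pclique t p.
Proof.
elim: p t a => [|i p IH] t [|j a] //.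
- by rewrite /nodecond /=; case: t => [A ch|secs] //= ->.
- rewrite /nodecond /= => _; case: t => [A ch|secs] /=; first by move=> h; rewrite inE h.
  case E: (onth secs i) => [[B [c|]]|]; rewrite ?(sec_onth E) ?(sec_onth_none E) ?inE //.
  by move=> ->.
- rewrite prefix_cons => /andP[/eqP-> hp]; case: t => [A ch|secs].
    rewrite nodecondPE /=; case: (onth ch i) => [c|] // h.
    by rewrite inE (IH _ _ hp h) orbT.
  rewrite nodecondQE /=; case: (onth secs i) => [[B [c|]]|] // h.
  by rewrite inE (IH _ _ hp h) orbT.
Qed.

Lemma C1 t p v : v \in pclique t p -> exists2 a, prefix a p & nodecond t a p v.
Proof.
elim: p t => [|i p IH] t.
  case: t => [A ch|secs] /= h; last by rewrite inE in h.
  by exists [::] => //; rewrite /nodecond /=.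
case: t => [A ch|secs] /=.
  rewrite inE => /orP[h|]; first by exists [::]; rewrite ?prefix0s // /nodecond /=.
  case E: (onth ch i) => [c|]; last by rewrite inE.
  case/IH => a ha hc; exists (i :: a); first by rewrite /= eqxx.
  by rewrite nodecondPE E.
case E: (onth secs i) => [[B [c|]]|]; last by rewrite inE.
  rewrite inE => /orP[h|].
    by exists [::]; rewrite ?prefix0s // /nodecond /= (sec_onth E) h.
  case/IH => a ha hc; exists (i :: a); first by rewrite /= eqxx.
  by rewrite nodecondQE E.
by move=> h; exists [::]; rewrite ?prefix0s // /nodecond /= (sec_onth E) h.
Qed.

Lemma nodecond_transfer t a p p' v : nodecond t a p v -> size a < size p' ->
  nth 0 p' (size a) = nth 0 p (size a) -> nodecond t a p' v.
Proof.
rewrite /nodecond; case: (subtree t a) => [[A ch|secs]|] // /andP[_ h] hs E.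
by rewrite hs E h.
Qed.

Lemma diff_node t c i0 i1 q0 q1 u :
  u \in pclique t (c ++ i0 :: q0) -> u \notin pclique t (c ++ i1 :: q1) ->
  exists a, at_node t a u /\ (prefix (rcons c i0) a \/
     (a = c /\ exists secs, subtree t c = Some (QN secs) /\ u \in sec secs i0 /\ u \notin sec secs i1)).
Proof.
move=> /C1 [a ha hn] hn1; exists a; split; first exact: nodecond_at hn.
have Ea : a = take (size a) (c ++ i0 :: q0) by move: ha; rewrite prefixE => /eqP.
case: (ltnP (size c) (size a)) => hca.
  left; rewrite prefixE size_rcons Ea take_takel // take_cat ltnNge leqnSn /=.
  by rewrite subSnn take_cons take0 cats1.
have Eac : a = take (size a) c by rewrite {1}Ea takel_cat.
have hp1 : prefix a (c ++ i1 :: q1) by rewrite Eac; apply: prefix_catl; rewrite prefixE size_take_min (minn_idPl hca).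
have hs1 : size a < size (c ++ i1 :: q1) by rewrite size_cat /= addnS ltnS (leq_trans hca) ?leq_addr.
case: (ltngtP (size a) (size c)) hca => // [hlt|heq] _.
  case/negP: hn1; apply: (C2 hp1); apply: (nodecond_transfer hn hs1).
  by rewrite !nth_cat hlt.
have Eac' : a = c by rewrite Eac heq take_size.
right; split => //; subst a.
move: hn hn1; rewrite /nodecond; case E: (subtree t c) => [[A ch|secs]|] //.
  by move=> h; case/negP; apply: (C2 hp1); rewrite /nodecond E.
case/andP => _; rewrite nth_cat ltnn subnn /= => h0 hn1.
exists secs; split=> //; split => //; apply/negP => h1; case/negP: hn1.
by apply: (C2 hp1); rewrite /nodecond E hs1 nth_cat ltnn subnn.
Qed.

Lemma max_ext e (S : {set T}) : is_clique e S -> exists K, maximal_clique e K /\ S \subset K.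
Proof.
move=> hS.
pose P := fun K : {set T} => is_clique e K && (S \subset K).
have P0 : P S by rewrite /P hS subxx.
case: (@arg_maxnP _ S P (fun K => #|K|) P0) => K /andP[hK hSK] hmax.
exists K; split => //; split => // K' hK' hKK'.
have hP : P K' by rewrite /P hK' (subset_trans hSK hKK').
have := hmax K' hP => hc.
by apply/eqP; rewrite eq_sym eqEcard hKK'; exact: hc.
Qed.

Lemma edge_clique e u w : symmetric e -> e u w -> is_clique e [set u; w].
Proof.
move=> sym huw; apply/forallP => a; apply/implyP; rewrite !inE => ha.
apply/forallP => b; apply/implyP; rewrite !inE => hb.
case/orP: ha => /eqP ->; case/orP: hb => /eqP ->; apply/implyP; rewrite ?eqxx // => _.
by rewrite sym.
Qed.


Lemma c4 (e' : rel T) x u y w : interval_graph e' ->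
  x != u -> u != y -> y != w -> w != x -> u != w -> x != y ->
  e' x u -> e' u y -> e' y w -> e' w x -> ~~ e' x y -> ~~ e' u w -> False.
Proof.
case=> I [hI he] n1 n2 n3 n4 n5 n6.
rewrite !he // 1?eq_sym //.
move=> /andP[a1 a2] /andP[b1 b2] /andP[c1 c2] /andP[d1 d2].
rewrite !negb_and -!ltnNge => /orP[f|f] /orP[g|g];
have := hI x; have := hI u; have := hI y; have := hI w; lia.
Qed.

Lemma subtree_cat t a b : subtree t (a ++ b) =
  if subtree t a is Some s then subtree s b else None.
Proof.
elim: a t => [|i a IH] t //=.
case: t => [A ch|secs].
  by case: (onth ch i) => [c|] //; rewrite IH.
by case: (onth secs i) => [[B [c|]]|] //; rewrite IH.
Qed.

Lemma onth_lt (U : Type) (s : seq U) j : j < size s -> exists z, onth s j = Some z.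
Proof. by elim: s j => [|z s IH] [|j] //= h; [exists z | apply: IH]. Qed.

Lemma path_via_P t c A ch j : mpq_wf t -> subtree t c = Some (PN A ch) -> j < size ch ->
  exists q, c ++ j :: q \in paths t.
Proof.
move=> wt hc /onth_lt [cj E].
have hs : subtree t (c ++ [:: j]) = Some cj.
  by rewrite subtree_cat hc /= E.
have [q hq] := paths_nonempty (wf_subtree wt hs).
by exists q; have := paths_sub hs hq; rewrite -catA.
Qed.

Lemma path_via_Q t c secs j : mpq_wf t -> subtree t c = Some (QN secs) -> j < size secs ->
  exists q, c ++ j :: q \in paths t.
Proof.
move=> wt hc /onth_lt [[B [cj|]] E].
  have hs : subtree t (c ++ [:: j]) = Some cj.
    by rewrite subtree_cat hc /= E.
  have [q hq] := paths_nonempty (wf_subtree wt hs).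
  by exists q; have := paths_sub hs hq; rewrite -catA.
exists [::]; apply: (paths_sub hc); rewrite pathsQE.
by have := FpQ_mem_none 0 E.
Qed.

Lemma uniq_map_inj (U V : eqType) (f : U -> V) s a b : uniq (map f s) -> a \in s -> b \in s ->
  f a = f b -> a = b.
Proof.
elim: s => [|z s IH] //= /andP[nz us]; rewrite !inE => /orP[/eqP->|ha] /orP[/eqP->|hb] //.
- by move=> E; move: nz; rewrite E map_f.
- by move=> E; move: nz; rewrite -E map_f.
- exact: IH.
Qed.

Lemma prefix_rcons_eq (c s : seq nat) i j : prefix (rcons c i) s -> prefix (rcons c j) s -> i = j.
Proof.
rewrite !prefixE !size_rcons => /eqP E1 /eqP E2.
by have := f_equal (last 0) (etrans (esym E1) E2); rewrite !last_rcons.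
Qed.

Lemma re_keep e x y a b : e a b -> (a != x) || (b != y) -> (a != y) || (b != x) ->
  remove_edge e x y a b.
Proof. by rewrite /remove_edge => -> h1 h2 /=; rewrite negb_or !negb_and h1 h2. Qed.

End S.

Lemma clique_edge (T : finType) (e : rel T) K a b : is_clique e K -> a \in K -> b \in K -> a != b -> e a b.
Proof.
move=> /forallP/(_ a)/implyP h ha hb hab.
by move: (h ha) => /forallP/(_ b)/implyP/(_ hb)/implyP/(_ hab).
Qed.

Lemma arith3 n : 3 <= n -> [/\ 0 < n, 1 < n, n.-1 < n, n.-2 < n & (n.-1 != n.-2) && (0 != n.-1)].
Proof. move=> h; split; try lia; apply/andP; split; apply/eqP; lia. Qed.

Lemma distinct_paths (c : seq nat) i j q q' : i != j -> c ++ i :: q != c ++ j :: q'.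
Proof.
move=> nij; apply/eqP => E; have := f_equal (fun s => nth 0 s (size c)) E.
by rewrite /= !nth_cat ltnn subnn /= => Eij; rewrite Eij eqxx in nij.
Qed.

Unset Implicit Arguments.

Theorem mainTheorem10 (T : finType) (e : rel T) (t : mpq T) (x y : T)
    (ax ay : seq nat) (Sy : {set T}) (chy : seq (mpq T)) :
  symmetric e -> irreflexive e -> interval_graph e -> mpq_tree_of e t ->
  e x y ->
  at_node t ax x -> at_node t ay y ->   (* ax = node(x), ay = node(y) *)
  prefix ax ay ->                      (* x is over y *)
  ax <> ay ->                          (* node(x) <> node(y) *)
  subtree t ay = Some (PN Sy chy) ->   (* node(y) is a P-node ... *)
  chy <> [::] ->                       (* ... that is not a leaf *)
  ~ interval_graph (remove_edge e x y).
Proof.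
move=> sym irr ig [wt uniqn qsec [ucl hcl] _] exy hx hy pxy nxy sty chne ig'.
rewrite cliques_paths in ucl hcl.
have node_eq : forall a b v, at_node t a v -> at_node t b v -> a = b.
  move=> a b v ha hb; case: (uniqn v) => a0 [_ h]; by rewrite -(h a ha) -(h b hb).
have in_node : forall a p v, at_node t a v -> v \in pclique t p -> prefix a p.
  move=> a p v ha /C1 [a' hp hn]; by rewrite (node_eq _ _ _ ha (nodecond_at hn)).
have adj : forall u w, e u w -> exists2 p, p \in paths t & (u \in pclique t p) && (w \in pclique t p).
  move=> u w huw; have [K [hK hS]] := max_ext (edge_clique sym huw).
  have /mapP [p hp EK] := (proj2 (hcl K) hK).
  exists p => //; rewrite -EK; apply/andP; split; apply: (subsetP hS); by rewrite !inE eqxx ?orbT.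
have hsize : size ax < size ay.
  move: pxy; rewrite prefixE => /eqP E; rewrite ltnNge; apply/negP => h.
  by apply: nxy; rewrite -E take_oversize.
have [p hp /andP[xp yp]] := adj x y exy.
have hayp := in_node _ _ _ hy yp.
have [a' hap hn] := C1 xp.
have Ea' : a' = ax := node_eq _ _ _ (nodecond_at hn) hx.
subst a'.
have HX : forall p', prefix ay p' -> size ay < size p' -> x \in pclique t p'.
  move=> p' h1 h2; apply: (C2 (prefix_trans pxy h1)).
  apply: (nodecond_transfer hn); first exact: ltn_trans hsize h2.
  move/prefixP: h1 => [r ->]; move/prefixP: hayp => [r' ->]; by rewrite !nth_cat hsize.
have ySy : y \in Sy by move: hy; rewrite /at_node sty.
have HY : forall p', prefix ay p' -> y \in pclique t p'.
  move=> p' h; apply: (C2 h); by rewrite /nodecond sty.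
have diffp : forall p0 p1, p0 \in paths t -> p1 \in paths t -> p0 != p1 ->
    exists2 u, u \in pclique t p0 & u \notin pclique t p1.
  move=> p0 p1 h0 h1 n01.
  have m0 : maximal_clique e (pclique t p0) by apply/hcl/map_f.
  have m1 : maximal_clique e (pclique t p1) by apply/hcl/map_f.
  case: (boolP (pclique t p0 \subset pclique t p1)) => hs.
    have E := (proj2 m0) _ (proj1 m1) hs.
    by case/eqP: n01; apply: (uniq_map_inj ucl h0 h1 (esym E)).
  by case/subsetPn: hs => u h0u h1u; exists u.
have final : forall (c : seq nat) i j u w au aw Pu Pu' Pw Pw',
  i != j -> at_node t au u -> at_node t aw w -> prefix (rcons c i) au -> prefix (rcons c j) aw ->
  Pu \in paths t -> Pw \in paths t ->
  u \in pclique t Pu -> u \notin pclique t Pu' -> w \in pclique t Pw -> w \notin pclique t Pw' ->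
  x \in pclique t Pu -> y \in pclique t Pu -> x \in pclique t Pu' -> y \in pclique t Pu' ->
  x \in pclique t Pw -> y \in pclique t Pw -> x \in pclique t Pw' -> y \in pclique t Pw' -> False.
  move=> c i j u w au aw Pu Pu' Pw Pw' nij hau haw pi pj hPu hPw hu hu' hw hw' x1 y1 x2 y2 x3 y3 x4 y4.
  have ux : u != x by apply: contraNneq hu' => ->.
  have uy : u != y by apply: contraNneq hu' => ->.
  have wx : w != x by apply: contraNneq hw' => ->.
  have wy : w != y by apply: contraNneq hw' => ->.
  have xy : x != y by apply: contraTneq exy => ->; rewrite irr.
  have uw : u != w.
    apply/eqP => E; subst w; have E' := node_eq _ _ _ hau haw; subst aw.
    by move/eqP: nij; apply; apply: prefix_rcons_eq pi pj.
  have neuw : ~~ e u w.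
    apply/negP => /adj [q hq /andP[uq wq]].
    have h1 := in_node _ _ _ hau uq; have h2 := in_node _ _ _ haw wq.
    by move/eqP: nij; apply; apply: prefix_rcons_eq (prefix_trans pi h1) (prefix_trans pj h2).
  have cu : is_clique e (pclique t Pu) by case: (proj1 (hcl _) (map_f _ hPu)).
  have cw : is_clique e (pclique t Pw) by case: (proj1 (hcl _) (map_f _ hPw)).
  apply: (c4 ig' (x:=x) (u:=u) (y:=y) (w:=w)).
  - by rewrite eq_sym.
  - exact: uy.
  - by rewrite eq_sym.
  - exact: wx.
  - exact: uw.
  - exact: xy.
  - apply: re_keep; [apply: clique_edge cu x1 hu _; by rewrite eq_sym | by apply/orP; right | by apply/orP; left].
  - apply: re_keep; [exact: clique_edge cu hu y1 _ | by apply/orP; left | by apply/orP; left].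
  - apply: re_keep; [apply: clique_edge cw y3 hw _; by rewrite eq_sym | by apply/orP; left; rewrite eq_sym | by apply/orP; right].
  - apply: re_keep; [exact: clique_edge cw hw x3 _ | by apply/orP; left | by apply/orP; left].
  - by rewrite /remove_edge !eqxx /= ?andbF.
  - by rewrite /remove_edge negb_and neuw.
case: chy chne sty => [|c0 [|c1 ch']] // _ sty.
  have wfy := wf_subtree wt sty; rewrite wfPE in wfy; case: wfy => [[_ hP] _].
  case: c0 sty hP => [A0 ch0|secs] sty hP; first by exfalso; apply: hP.
  have sQ : subtree t (ay ++ [:: 0]) = Some (QN secs) by rewrite subtree_cat sty.
  have wQ := wf_subtree wt sQ; rewrite wfQE in wQ.
  case: wQ => [[hk [_ [hb1 hb2]] _ _ _] _].
  set c := ay ++ [:: 0].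
  have ext : forall j q, prefix ay (c ++ j :: q) /\ size ay < size (c ++ j :: q).
    move=> j q; rewrite /c -catA; split; first exact: prefix_prefix.
    by rewrite size_cat /= addnS ltnS leq_addr.
  have [k0 k1 k2 k3 /andP[n23 n03]] := arith3 hk.
  have [q0 h0] := path_via_Q wt sQ k0.
  have [q1 h1] := path_via_Q wt sQ k1.
  have [q2 h2] := path_via_Q wt sQ k2.
  have [q3 h3] := path_via_Q wt sQ k3.
  have [u hu hu'] := diffp _ _ h0 h1 (distinct_paths _ _ _ (isT : 0 != 1)).
  have [w hw hw'] := diffp _ _ h2 h3 (distinct_paths _ _ _ n23).
  have [au [hau hpu]] := diff_node hu hu'.
  have [aw [haw hpw]] := diff_node hw hw'.
  have pu : prefix (rcons c 0) au.
    case: hpu => // [[_ [secs' [E [s0 s1]]]]].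
    rewrite sQ in E; case: E => E; subst secs'.
    by case/negP: s1; apply: (subsetP hb1).
  have pw : prefix (rcons c (size secs).-1) aw.
    case: hpw => // [[_ [secs' [E [s0 s1]]]]].
    rewrite sQ in E; case: E => E; subst secs'.
    by case/negP: s1; apply: (subsetP hb2).
  apply: (final c 0 (size secs).-1 u w au aw _ _ _ _ n03 hau haw pu pw h0 h2 hu hu' hw hw');
    (apply: HX; [exact: (proj1 (ext _ _)) | exact: (proj2 (ext _ _))]) || (apply: HY; exact: (proj1 (ext _ _))).
have ext : forall j q, prefix ay (ay ++ j :: q) /\ size ay < size (ay ++ j :: q).
  move=> j q; split; first exact: prefix_prefix.
  by rewrite size_cat /= addnS ltnS leq_addr.
have [q0 h0] := path_via_P (j:=0) wt sty isT.
have [q1 h1] := path_via_P (j:=1) wt sty isT.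
have [u hu hu'] := diffp _ _ h0 h1 (distinct_paths _ _ _ (isT : 0 != 1)).
have [w hw hw'] := diffp _ _ h1 h0 (distinct_paths _ _ _ (isT : 1 != 0)).
have [au [hau hpu]] := diff_node hu hu'.
have [aw [haw hpw]] := diff_node hw hw'.
have pu : prefix (rcons ay 0) au.
  by case: hpu => // [[_ [secs' [E _]]]]; rewrite sty in E.
have pw : prefix (rcons ay 1) aw.
  by case: hpw => // [[_ [secs' [E _]]]]; rewrite sty in E.
apply: (final ay 0 1 u w au aw _ _ _ _ isT hau haw pu pw h0 h1 hu hu' hw hw');
  (apply: HX; [exact: (proj1 (ext _ _)) | exact: (proj2 (ext _ _))]) || (apply: HY; exact: (proj1 (ext _ _))).
Qed.
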